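(* For every integer $k$ (positive, zero or negative) there exists a tree $T$ with $\gamma^{0}_{st}(T)=k$.
   Context: For a vertex $v$ of a graph $G=(V,E)$, $N(v)$ is its open neighborhood, and for $f:V\to\mathbb{R}$ and $B\subseteq V$ write $f(B)=\sum_{v\in B}f(v)$; $f(V)$ is the weight of $f$. An inverse signed total dominating function (ISTDF) of $G$ is a function $f:V\to\{-1,1\}$ such that $f(N(v))\le 0$ for every $v\in V$. The inverse signed total domination number $\gamma^{0}_{st}(G)$ is the maximum weight of an ISTDF of $G$. *)

(* Defs.v *)
From HB Require Import structures.
From mathcomp Require Import all_boot all_order all_algebra.
Set Implicit Arguments. Unset Strict Implicit. Unset Printing Implicit Defensive.
Import Order.TTheory GRing.Theory Num.Theory.
Local Open Scope ring_scope.

Definition simple_graph (T : finType) (e : rel T) : Prop :=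
  symmetric e /\ irreflexive e.

Definition is_tree (T : finType) (e : rel T) : Prop :=
  (0 < #|T|)%N
  /\ (forall x y : T, connect e x y)
  /\ (forall c : seq T, uniq c -> (2 < size c)%N -> ~~ cycle e c).

Definition istdf (T : finType) (e : rel T) (f : T -> int) : Prop :=
  (forall v, f v = 1 \/ f v = -1) /\
  (forall v, \sum_(u | e v u) f u <= 0).

Definition weight (T : finType) (f : T -> int) : int := \sum_(v : T) f v.

Definition is_istd_number (T : finType) (e : rel T) (k : int) : Prop :=
  (exists f, istdf e f /\ weight f = k) /\
  (forall f, istdf e f -> weight f <= k).

(* Main.v *)
Require Import Defs.
From HB Require Import structures.
From mathcomp Require Import all_boot all_order all_algebra zify.
Set Implicit Arguments. Unset Strict Implicit. Unset Printing Implicit Defensive.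
Import Order.TTheory GRing.Theory Num.Theory.
Local Open Scope ring_scope.

Definition treeRel (T : finType) (isp : rel T) : rel T :=
  fun x y => isp y x || isp x y.

Lemma seq_max (T : eqType) (d : T -> nat) (s : seq T) :
  s != [::] -> exists2 x, x \in s & forall y, y \in s -> (d y <= d x)%N.
Proof.
elim: s => [//|a s IH] _.
case: (eqVneq s [::]) => [->|/IH [x xs Hx]].
  by exists a => [|y]; rewrite ?inE ?eqxx // => /eqP ->.
case: (leqP (d a) (d x)) => H.
  exists x; first by rewrite inE xs orbT.
  by move=> y; rewrite inE => /orP [/eqP ->|/Hx].
exists a; first by rewrite inE eqxx.
move=> y; rewrite inE => /orP [/eqP ->//|/Hx Hy].
by apply: leq_trans Hy (ltnW H).
Qed.

Lemma tree_of_parent (T : finType) (isp : rel T) (d : T -> nat) (r : T) :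
  (forall p x, isp p x -> d x = (d p).+1) ->
  (forall p q x, isp p x -> isp q x -> p = q) ->
  (forall x, x != r -> exists p, isp p x) ->
  simple_graph (treeRel isp) /\ is_tree (treeRel isp).
Proof.
move=> Hd Hu Hex.
have sym : symmetric (treeRel isp) by move=> x y; rewrite /treeRel orbC.
split; first split => //.
  move=> x; rewrite /treeRel orbb; apply/negP => /Hd /eqP.
  by rewrite -[X in X == _]addn0 -addn1 eqn_add2l.
split; first by apply/card_gt0P; exists r.
split.
  have toR : forall x, connect (treeRel isp) x r.
    move=> x; move: {2}(d x) (leqnn (d x)) => n; elim: n x => [|n IH] x Hx.
      case: (eqVneq x r) => [->|/Hex [p Hp]]; first exact: connect0.
      by move: Hx; rewrite (Hd _ _ Hp).
    case: (eqVneq x r) => [->|/Hex [p Hp]]; first exact: connect0.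
    apply: connect_trans (IH p _); last by move: Hx; rewrite (Hd _ _ Hp).
    by apply: connect1; rewrite /treeRel Hp.
  move=> x y; apply: connect_trans (toR x) _.
  by rewrite (sym_connect_sym sym).
move=> c uc sc; apply/negP => cc.
have [x xc Hx] : exists2 x, x \in c & forall y, y \in c -> (d y <= d x)%N.
  by apply: seq_max; case: c sc {uc cc}.
case: (rot_to xc) => i s' Hrot.
have uc' : uniq (x :: s') by rewrite -Hrot rot_uniq.
have cc' : cycle (treeRel isp) (x :: s') by rewrite -Hrot rot_cycle.
have sz : (2 < size (x :: s'))%N by rewrite -Hrot size_rot.
have mem' : forall y, y \in x :: s' -> (d y <= d x)%N by move=> y; rewrite -Hrot mem_rot; apply: Hx.
clear Hrot xc; move: uc' cc' sz mem'; case/lastP: s' => [//|u z].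
case: u => [//|y u] uc' cc' sz mem'.
rewrite /= rcons_path in cc'.
case/and3P: cc' => exy _ ezx.
rewrite last_rcons in ezx.
have lower : forall w, treeRel isp x w -> w \in x :: rcons (y :: u) z -> isp w x.
  move=> w; rewrite /treeRel => /orP [//|/Hd Hw] /mem'.
  by rewrite Hw ltnn.
have Py : isp y x by apply: lower => //; rewrite !inE eqxx orbT.
have exz : treeRel isp x z by rewrite sym.
have Pz : isp z x by apply: lower => //; rewrite inE mem_rcons inE eqxx orbT.
have yz := Hu _ _ _ Py Pz.
move: uc'; rewrite /= => /andP [_ /andP [] ].
by rewrite yz mem_rcons inE eqxx.
Qed.

Section A.
Variable n : nat.
Definition VA : finType := ('I_1 + 'I_n.+1 + 'I_n.+1 + 'I_n.+1)%type.
Definition cenA : VA := inl (inl (inl ord0)).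
Definition clA i : VA := inl (inl (inr i)).
Definition armA i : VA := inl (inr i).
Definition alA i : VA := inr i.
Definition ispA (p x : VA) : bool :=
  match x, p with
  | inl (inl (inr _)), inl (inl (inl _)) => true
  | inl (inr _), inl (inl (inl _)) => true
  | inr i, inl (inr j) => i == j
  | _, _ => false
  end.
Definition dA (x : VA) : nat :=
  match x with
  | inl (inl (inl _)) => 0 | inl (inl (inr _)) => 1 | inl (inr _) => 1 | inr _ => 2 end%N.

Lemma treeA : simple_graph (treeRel ispA) /\ is_tree (treeRel ispA).
Proof.
apply: (@tree_of_parent _ ispA dA cenA).
- by case=> [[[a|a]|a]|a] [[[b|b]|b]|b].
- case=> [[[a|a]|a]|a] [[[b|b]|b]|b] [[[c|c]|c]|c] //=.
  + by rewrite (ord1 a) (ord1 b).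
  + by rewrite (ord1 a) (ord1 b).
  + by move=> /eqP -> /eqP ->.
- case=> [[[a|a]|a]|a].
  + by rewrite /cenA (ord1 a) eqxx.
  + by move=> _; exists cenA.
  + by move=> _; exists cenA.
  + by move=> _; exists (armA a); rewrite /= eqxx.
Qed.

Lemma sumA (F : VA -> int) :
  \sum_(u : VA) F u = F cenA + \sum_i F (clA i) + \sum_i F (armA i) + \sum_i F (alA i).
Proof. by rewrite !big_sumType big_ord1. Qed.

Definition nbr (f : VA -> int) v := \sum_(u | treeRel ispA v u) f u.

Lemma nbr_cen f : nbr f cenA = \sum_i f (clA i) + \sum_i f (armA i).
Proof. by rewrite /nbr big_mkcond sumA /treeRel /= big1_eq add0r addr0. Qed.

Lemma nbr_cl f i : nbr f (clA i) = f cenA.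
Proof. by rewrite /nbr big_mkcond sumA /treeRel /= !big1_eq !addr0. Qed.

Lemma sum_eqi (F : 'I_n.+1 -> int) i : \sum_j (if j == i then F j else 0) = F i.
Proof. by rewrite -big_mkcond big_pred1_eq. Qed.
Lemma sum_eqi' (F : 'I_n.+1 -> int) i : \sum_j (if i == j then F j else 0) = F i.
Proof. rewrite -(sum_eqi F i); apply: eq_bigr => j _; by rewrite eq_sym. Qed.

Lemma nbr_arm f i : nbr f (armA i) = f cenA + f (alA i).
Proof. by rewrite /nbr big_mkcond sumA /treeRel /= !big1_eq (sum_eqi (fun j => f (alA j))) !addr0. Qed.

Lemma nbr_al f i : nbr f (alA i) = f (armA i).
Proof.
rewrite /nbr big_mkcond sumA /treeRel /= !big1_eq.
under eq_bigr => j _ do rewrite orbF.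
by rewrite (sum_eqi' (fun j => f (armA j))) !add0r addr0.
Qed.


Lemma sumD (F G : 'I_n.+1 -> int) : \sum_i (F i + G i) = \sum_i F i + \sum_i G i.
Proof. exact: big_split. Qed.

Definition fA (v : VA) : int :=
  match v with
  | inl (inl (inl _)) => -1 | inl (inl (inr _)) => 1 | inl (inr _) => -1 | inr _ => 1 end.

Lemma pm1_le (x : int) : x = 1 \/ x = -1 -> x <= 0 -> x = -1.
Proof. by case=> ->. Qed.
Lemma pm1_le1 (x : int) : x = 1 \/ x = -1 -> x <= 1.
Proof. by case=> ->. Qed.

Lemma istdA : is_istd_number (treeRel ispA) (Posz n).
Proof.
split.
  exists fA; split.
    split; first by case=> [[[a|a]|a]|a]; [right|left|right|left].
    case=> [[[a|a]|a]|a].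
    - rewrite (ord1 a); move: (nbr_cen fA); rewrite /nbr => ->.
      rewrite -sumD big1 // => i _; rewrite /= addrN.
    - by move: (nbr_cl fA a); rewrite /nbr => ->.
    - by move: (nbr_arm fA a); rewrite /nbr => ->.
    - by move: (nbr_al fA a); rewrite /nbr => ->.
  rewrite /weight sumA /= -addrA -sumD [X in _ + X]big1; last by move=> i _; rewrite /= addNr.
  rewrite sumr_const card_ord addr0; lia.
move=> f [Hv Hn].
have fc : f cenA = -1.
  by apply: pm1_le => //; move: (Hn (clA ord0)); rewrite -/(nbr f _) nbr_cl.
have fa : forall i, f (armA i) = -1.
  by move=> i; apply: pm1_le => //; move: (Hn (alA i)); rewrite -/(nbr f _) nbr_al.
have -> : weight f = -1 + \sum_i f (clA i) + \sum_i (f (armA i) + f (alA i)).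
  by rewrite /weight sumA big_split /= fc !addrA.
have H1 : \sum_i f (clA i) <= \sum_(i < n.+1) 1 by apply: ler_sum => i _; apply: pm1_le1.
have H2 : \sum_i (f (armA i) + f (alA i)) <= 0.
  by apply: sumr_le0 => i _; rewrite fa; move: (pm1_le1 (Hv (alA i))); rewrite addrC subr_le0.
move: H1 H2; rewrite sumr_const card_ord; lia.
Qed.
End A.

Section B.
Variable n : nat.
Definition VB : finType := ('I_1 + 'I_1 + 'I_n.+1 + ('I_n.+1 * bool))%type.
Definition cenB : VB := inl (inl (inl ord0)).
Definition clB : VB := inl (inl (inr ord0)).
Definition armB i : VB := inl (inr i).
Definition alB i b : VB := inr (i, b).
Definition ispB (p x : VB) : bool :=
  match x, p with
  | inl (inl (inr _)), inl (inl (inl _)) => true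
  | inl (inr _), inl (inl (inl _)) => true
  | inr (i, _), inl (inr j) => i == j
  | _, _ => false
  end.
Definition dB (x : VB) : nat :=
  match x with
  | inl (inl (inl _)) => 0 | inl (inl (inr _)) => 1 | inl (inr _) => 1 | inr _ => 2 end%N.

Lemma treeB : simple_graph (treeRel ispB) /\ is_tree (treeRel ispB).
Proof.
apply: (@tree_of_parent _ ispB dB cenB).
- by case=> [[[a|a]|a]|[a b]] [[[c|c]|c]|[c d]].
- case=> [[[a|a]|a]|[a b]] [[[c|c]|c]|[c d]] [[[e|e]|e]|[e g]] //=.
  + by rewrite (ord1 a) (ord1 c).
  + by rewrite (ord1 a) (ord1 c).
  + by move=> /eqP -> /eqP ->.
- case=> [[[a|a]|a]|[a b]].
  + by rewrite /cenB (ord1 a) eqxx.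
  + by move=> _; exists cenB.
  + by move=> _; exists cenB.
  + by move=> _; exists (armB a); rewrite /= eqxx.
Qed.

Lemma sumDB (F G : 'I_n.+1 -> int) : \sum_i (F i + G i) = \sum_i F i + \sum_i G i.
Proof. exact: big_split. Qed.

Lemma sumB (F : VB -> int) :
  \sum_(u : VB) F u = F cenB + F clB + \sum_i F (armB i)
     + \sum_i (F (alB i true) + F (alB i false)).
Proof.
rewrite !big_sumType !big_ord1.
rewrite (eq_bigr (fun p => F (inr (p.1, p.2)))); last by case.
rewrite -(pair_bigA _ (fun i b => F (inr (i, b)))).
rewrite /=; congr (_ + _); apply: eq_bigr => i _; exact: big_bool.
Qed.

Definition nbrB (f : VB -> int) v := \sum_(u | treeRel ispB v u) f u.

Lemma sum_eqiB (F : 'I_n.+1 -> int) i : \sum_j (if j == i then F j else 0) = F i.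
Proof. by rewrite -big_mkcond big_pred1_eq. Qed.
Lemma sum_eqi'B (F : 'I_n.+1 -> int) i : \sum_j (if i == j then F j else 0) = F i.
Proof. rewrite -(sum_eqiB F i); apply: eq_bigr => j _; by rewrite eq_sym. Qed.

Lemma nbrB_cen f : nbrB f cenB = f clB + \sum_i f (armB i).
Proof. rewrite /nbrB big_mkcond sumB /treeRel /=. rewrite [X in _ + X]big1 => [|i _]; by rewrite ?addr0 ?add0r. Qed.
Lemma nbrB_cl f : nbrB f clB = f cenB.
Proof. rewrite /nbrB big_mkcond sumB /treeRel /=. by rewrite !addr0 !big1_eq !addr0. Qed.
Lemma nbrB_arm f i : nbrB f (armB i) = f cenB + (f (alB i true) + f (alB i false)).
Proof. rewrite /nbrB big_mkcond sumB /treeRel /=. by rewrite big1_eq sumDB (sum_eqiB (fun j => f (alB j true))) (sum_eqiB (fun j => f (alB j false))) !addr0. Qed.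
Lemma nbrB_al f i b : nbrB f (alB i b) = f (armB i).
Proof. rewrite /nbrB big_mkcond sumB /treeRel /=. rewrite [X in _ + X]big1; last by move=> j _; rewrite addr0.
under eq_bigr => j _ do rewrite orbF.
by rewrite (sum_eqi'B (fun j => f (armB j))) !add0r addr0. Qed.

Definition fB (v : VB) : int :=
  match v with
  | inl (inl (inl _)) => -1 | inl (inl (inr _)) => 1 | inl (inr _) => -1
  | inr (_, b) => if b then 1 else -1 end.

Lemma pm1_leB (x : int) : x = 1 \/ x = -1 -> x <= 0 -> x = -1.
Proof. by case=> ->. Qed.
Lemma pm1_le1B (x : int) : x = 1 \/ x = -1 -> x <= 1.
Proof. by case=> ->. Qed.
Lemma pm1_pair (x y : int) : x = 1 \/ x = -1 -> y = 1 \/ y = -1 -> -1 + (x + y) <= 0 -> x + y <= 0.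
Proof. by case=> -> [] ->. Qed.

Lemma istdB : is_istd_number (treeRel ispB) (Negz n).
Proof.
split.
  exists fB; split.
    split; first by case=> [[[a|a]|a]|[a []]]; [right|left|right|left|right].
    case=> [[[a|a]|a]|[a b]].
    - rewrite (ord1 a); move: (nbrB_cen fB); rewrite /nbrB => -> /=.
      rewrite sumrN sumr_const card_ord; lia.
    - by rewrite (ord1 a); move: (nbrB_cl fB); rewrite /nbrB => ->.
    - by move: (nbrB_arm fB a); rewrite /nbrB => ->.
    - by move: (nbrB_al fB a b); rewrite /nbrB => ->.
  rewrite /weight sumB /= [X in _ + X]big1; last by move=> i _; rewrite addrN.
  rewrite sumrN sumr_const card_ord; lia.
move=> f [Hv Hn].
have fc : f cenB = -1.
  by apply: pm1_leB => //; move: (Hn clB); rewrite -/(nbrB f _) nbrB_cl.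
have fa : forall i, f (armB i) = -1.
  by move=> i; apply: pm1_leB => //; move: (Hn (alB i false)); rewrite -/(nbrB f _) nbrB_al.
have H2 : \sum_i (f (alB i true) + f (alB i false)) <= 0.
  apply: sumr_le0 => i _; apply: pm1_pair => //.
  by move: (Hn (armB i)); rewrite -/(nbrB f _) nbrB_arm fc.
have H1 := pm1_le1B (Hv clB).
rewrite /weight sumB fc (eq_bigr (fun _ => -1)) //.
move: H1 H2; rewrite sumrN sumr_const card_ord; lia.
Qed.
End B.

Theorem proposition4p1 (k : int) :
  exists (T : finType) (e : rel T),
    simple_graph e /\ is_tree e /\ is_istd_number e k.
Proof.
case: k => n.
  exists (VA n), (treeRel (@ispA n)).
  by case: (treeA n) => H1 H2; split; [|split; [|exact: istdA]].
exists (VB n), (treeRel (@ispB n)).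
by case: (treeB n) => H1 H2; split; [|split; [|exact: istdB]].
Qed.
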